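(* Let $n>3$ and let $(\mathcal{P},\cdot,\{-,-\})$ be an $n$-dimensional complex Poisson algebra such that $(\mathcal{P},\cdot)$ is filiform. Then $(\mathcal{P},\cdot,\{-,-\})$ is isomorphic to one of the following algebras with basis $e_1,\dots,e_n$, where in each case $e_i\cdot e_j=e_{i+j}$ for $2\le i+j\le n-1$, the listed products are the only further nonzero ones (up to commutativity of $\cdot$ and anticommutativity of $\{-,-\}$): $\mathcal{P}_{1,1}^n$: no further products; $\mathcal{P}_{1,2}^n$: $\{e_1,e_n\}=e_n$; $\mathcal{P}_{1,3}^n$: $\{e_1,e_n\}=e_{n-1}$; $\mathcal{P}_{1,4}^n$: $e_n\cdot e_n=e_{n-1}$; $\mathcal{P}_{1,5}^n$: $e_n\cdot e_n=e_{n-1}$, $\{e_1,e_n\}=e_{n-1}$.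
   Context: A Poisson algebra is a vector space with a commutative associative product $\cdot$ and a Lie bracket $\{-,-\}$ satisfying $\{x\cdot y,z\}=\{x,z\}\cdot y+x\cdot\{y,z\}$. An $n$-dimensional algebra $\mathcal{P}$ is filiform if $\dim\mathcal{P}^i=n-i$ for $2\le i\le n$, where $\mathcal{P}^1=\mathcal{P}$ and $\mathcal{P}^{k+1}=\mathcal{P}^k\cdot\mathcal{P}$. *)

(* Defs.v *)
From HB Require Import structures.
From mathcomp Require Import all_boot all_order all_algebra.
From mathcomp Require Import reals complex.
Set Implicit Arguments. Unset Strict Implicit. Unset Printing Implicit Defensive.
Import Order.TTheory GRing.Theory Num.Theory.
Local Open Scope ring_scope.

Definition bilinear_op (K : fieldType) (V : vectType K) (op : V -> V -> V) :=
  (forall (a : K) (x y z : V), op (a *: x + y) z = a *: op x z + op y z) /\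
  (forall (a : K) (x y z : V), op x (a *: y + z) = a *: op x y + op x z).

Definition poisson_algebra (K : fieldType) (V : vectType K)
  (mul br : V -> V -> V) :=
  [/\ bilinear_op mul /\ bilinear_op br,
      (forall x y, mul x y = mul y x) /\
      (forall x y z, mul (mul x y) z = mul x (mul y z)),
      (forall x, br x x = 0),
      (forall x y z, br x (br y z) + br y (br z x) + br z (br x y) = 0)
    & (forall x y z, br (mul x y) z = mul (br x z) y + mul x (br y z))].

Definition prod_space (K : fieldType) (V : vectType K) (mul : V -> V -> V)
  (U W : {vspace V}) : {vspace V} :=
  <<allpairs mul (vbasis U) (vbasis W)>>%VS.

(* Descending series: P^1 = P, P^(k+1) = P^k . P  (lower_pow mul k = P^(k+1)). *)
Fixpoint lower_pow (K : fieldType) (V : vectType K) (mul : V -> V -> V)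
  (k : nat) : {vspace V} :=
  match k with
  | 0 => fullv
  | k'.+1 => prod_space mul (lower_pow mul k') fullv
  end.

Definition algpow (K : fieldType) (V : vectType K) (mul : V -> V -> V)
  (i : nat) : {vspace V} := lower_pow mul i.-1.

Definition filiform (K : fieldType) (V : vectType K) (mul : V -> V -> V) :=
  forall i : nat, (2 <= i <= \dim (fullv : {vspace V}))%N ->
    \dim (algpow mul i) = (\dim (fullv : {vspace V}) - i)%N.

(* 1-based basis vector e_k of 'rV_n (0 if k is out of range). *)
Definition ebas (K : fieldType) (n k : nat) : 'rV[K]_n :=
  \row_(j < n) (if (j.+1 == k)%N then 1 else 0).

(* Bilinear extension of a table on basis vectors (1-based indices). *)
Definition of_table (K : fieldType) (n : nat) (tab : nat -> nat -> 'rV[K]_n)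
  (x y : 'rV[K]_n) : 'rV[K]_n :=
  \sum_(i < n) \sum_(j < n) (x 0 i * y 0 j) *: tab i.+1 j.+1.

Definition fil_mul_tab (K : fieldType) (n : nat) (c : bool) (i j : nat)
  : 'rV[K]_n :=
  (if (i + j <= n.-1)%N then ebas K n (i + j) else 0) +
  (if [&& c, i == n & j == n] then ebas K n n.-1 else 0).

Definition fil_br_tab (K : fieldType) (n : nat) (b : 'rV[K]_n) (i j : nat)
  : 'rV[K]_n :=
  if (i == 1%N) && (j == n) then b
  else if (i == n) && (j == 1%N) then - b else 0.

Definition model_mul (K : fieldType) (n : nat) (c : bool) :=
  of_table (fil_mul_tab K n c).
Definition model_br (K : fieldType) (n : nat) (b : 'rV[K]_n) :=
  of_table (fil_br_tab b).

Definition poisson_iso (K : fieldType) (V W : vectType K)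
  (mulV brV : V -> V -> V) (mulW brW : W -> W -> W) :=
  exists f : V -> W,
    [/\ (forall (a : K) (x y : V), f (a *: x + y) = a *: f x + f y),
        bijective f,
        (forall x y, f (mulV x y) = mulW (f x) (f y))
      & (forall x y, f (brV x y) = brW (f x) (f y))].

(* Main.v *)
Require Import Defs.
From HB Require Import structures.
From mathcomp Require Import all_boot all_order all_algebra.
From mathcomp Require Import reals complex zify ring.
Set Implicit Arguments. Unset Strict Implicit. Unset Printing Implicit Defensive.
Import Order.TTheory GRing.Theory Num.Theory.
Local Open Scope ring_scope.

Ltac isnat x := let T := type of x in tryif unify T nat then idtac else
  (tryif (let y := constr:(nat_of_ord x) in idtac) then idtac else fail).
Ltac nlia := repeat match goal with
  | H : ?T |- _ => lazymatch T with
       | is_true (leq _ _) => fail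
       | is_true (_ && _) => fail
       | @eq bool _ _ => fail
       | ~ (@eq _ ?x _) => tryif isnat x then fail else clear H
       | @eq _ ?x _ => tryif isnat x then fail else clear H
       | is_true (~~ (?x == _)) => tryif isnat x then fail else clear H
       | is_true (?x == _) => tryif isnat x then fail else clear H
       | nat => fail
       | ordinal _ => fail
       | _ => clear H
     end
  end; lia.


Section LinAlg.
Variables (K : fieldType) (V : vectType K).
Implicit Types (U W : {vspace V}) (u v w : V).

Lemma dim_line_add v U : v \notin U -> \dim (<[v]> + U) = (\dim U).+1.
Proof.
move=> vU; rewrite dimv_disjoint_sum.
  have v0 : v != 0 by apply: contraNneq vU => ->; apply: mem0v.
  by rewrite dim_vline v0.
apply/eqP; rewrite -subv0; apply/subvP => z /memv_capP [/vlineP [c ->] zU].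
rewrite memv0; have [->|c0] := eqVneq c 0; first by rewrite scale0r.
have : c^-1 *: (c *: v) \in U by apply: memvZ.
by rewrite scalerA mulVf // scale1r (negbTE vU).
Qed.

Lemma exists_notin U W : (\dim U < \dim W)%N -> exists2 v, v \in W & v \notin U.
Proof.
move=> lt; apply/subvPn; apply: contraTN lt => /dimvS; by rewrite leqNgt.
Qed.

Lemma line_split U W v : (U <= W)%VS -> v \in W -> v \notin U ->
  \dim W = (\dim U).+1 -> forall m, m \in W -> exists2 c, m - c *: v \in U & True.
Proof.
move=> UW vW vU dW m mW.
have eq : (<[v]> + U)%VS = W.
  apply/eqP; rewrite eqEdim dim_line_add // dW leqnn andbT subv_add UW andbT.
  by apply/subvP => z /vlineP [c ->]; apply: memvZ.
move: mW; rewrite -eq => /memv_addP [p /vlineP [c ->] [q qU ->]].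
by exists c => //; rewrite [c *: v + q]addrC addrK.
Qed.

Lemma decomp2 U u w : u \notin U -> w \notin (<[u]> + U)%VS ->
  (\dim U).+2 = \dim (fullv : {vspace V}) ->
  forall p, exists a b r, r \in U /\ p = a *: u + b *: w + r.
Proof.
move=> uU wU dU p.
have eq : (<[w]> + (<[u]> + U))%VS = fullv.
  apply/eqP; rewrite eqEdim subvf /= !dim_line_add // -dU; by [].
have : p \in (<[w]> + (<[u]> + U))%VS by rewrite eq memvf.
move=> /memv_addP [p1 /vlineP [b ->] [q /memv_addP [p2 /vlineP [a ->] [r rU ->]] ->]].
exists a, b, r; split => //; by rewrite addrA [b *: w + _]addrC.
Qed.

End LinAlg.

Section Iso.
Variables (K : fieldType) (V : vectType K) (n : nat) (Xs : n.-tuple V).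
Hypothesis Xspan : (<<Xs>> = fullv)%VS.
Hypothesis Xdim : \dim (fullv : {vspace V}) = n.

Definition gf (r : 'rV[K]_n) : V := \sum_(i < n) r 0 i *: Xs`_i.
Definition ff (v : V) : 'rV[K]_n := \row_(i < n) coord Xs i v.

Lemma Xfree : free Xs.
Proof. by rewrite /free Xspan Xdim size_tuple. Qed.

Lemma gfK v : gf (ff v) = v.
Proof.
have vX : v \in <<Xs>>%VS by rewrite Xspan memvf.
rewrite {2}(coord_span vX) /gf; apply: eq_bigr => i _; by rewrite mxE.
Qed.

Lemma ffK r : ff (gf r) = r.
Proof.
apply/rowP => j; rewrite mxE /gf linear_sum /=.
rewrite (bigD1 j) //= big1 ?addr0.
  by rewrite linearZ /= coord_free ?Xfree // eqxx mulr1.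
by move=> i ij; rewrite linearZ /= coord_free ?Xfree // (negbTE ij) mulr0.
Qed.

Lemma gf_lin a r s : gf (a *: r + s) = a *: gf r + gf s.
Proof.
rewrite /gf scaler_sumr -big_split; apply: eq_bigr => i _.
by rewrite !mxE scalerDl scalerA.
Qed.

Lemma ff_lin a u w : ff (a *: u + w) = a *: ff u + ff w.
Proof. by apply/rowP => j; rewrite !mxE linearP. Qed.

Lemma ff_bij : bijective ff.
Proof. exists gf; [exact: gfK | exact: ffK]. Qed.

Lemma gf_sum I r (P : pred I) (F : I -> 'rV[K]_n) :
  gf (\sum_(i <- r | P i) F i) = \sum_(i <- r | P i) gf (F i).
Proof.
apply: (big_morph gf); last by rewrite /gf big1 // => i _; rewrite mxE scale0r.
by move=> u w; have := gf_lin 1 u w; rewrite !scale1r.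
Qed.

Lemma gf0 : gf 0 = 0.
Proof. by rewrite /gf big1 // => i _; rewrite mxE scale0r. Qed.
Lemma gfZ a r : gf (a *: r) = a *: gf r.
Proof. by have := gf_lin a r 0; rewrite !addr0 gf0 addr0. Qed.
Lemma gfN r : gf (- r) = - gf r.
Proof. by rewrite -scaleN1r gfZ scaleN1r. Qed.
Lemma gfD r s : gf (r + s) = gf r + gf s.
Proof. by have := gf_lin 1 r s; rewrite !scale1r. Qed.
Lemma gf_ebas k : (0 < k <= n)%N -> gf (ebas K n k) = Xs`_k.-1.
Proof.
case: k => // k /= kn; rewrite /gf (bigD1 (Ordinal kn)) //= big1 ?addr0.
  by rewrite mxE eqxx scale1r.
by move=> i ik; rewrite mxE eqSS; case: eqP => [e|]; [case/eqP: ik; apply: val_inj | rewrite scale0r].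
Qed.

Variable op : V -> V -> V.
Hypothesis opDZl : forall (a : K) (x y z : V), op (a *: x + y) z = a *: op x z + op y z.
Hypothesis opDZr : forall (a : K) (x y z : V), op x (a *: y + z) = a *: op x y + op x z.

Lemma op0l w : op 0 w = 0.
Proof.
have h := opDZl 1 0 0 w; rewrite !scale1r addr0 in h.
by apply: (addrI (op 0 w)); rewrite addr0 -h.
Qed.
Lemma op0r w : op w 0 = 0.
Proof.
have h := opDZr 1 w 0 0; rewrite !scale1r addr0 in h.
by apply: (addrI (op w 0)); rewrite addr0 -h.
Qed.
Lemma op_suml I r (P : pred I) (F : I -> V) w :
  op (\sum_(i <- r | P i) F i) w = \sum_(i <- r | P i) op (F i) w.
Proof.
have H : {morph (fun u => op u w) : u v / u + v}.
  by move=> u v /=; have := opDZl 1 u v w; rewrite !scale1r.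
exact: (big_morph (fun u => op u w) H (op0l w)).
Qed.
Lemma op_sumr I r (P : pred I) (F : I -> V) w :
  op w (\sum_(i <- r | P i) F i) = \sum_(i <- r | P i) op w (F i).
Proof.
have H : {morph (fun u => op w u) : u v / u + v}.
  by move=> u v /=; have := opDZr 1 w u v; rewrite !scale1r.
exact: (big_morph (fun u => op w u) H (op0r w)).
Qed.
Lemma opZl a u w : op (a *: u) w = a *: op u w.
Proof. by have := opDZl a u 0 w; rewrite addr0 op0l addr0. Qed.
Lemma opZr a u w : op w (a *: u) = a *: op w u.
Proof. by have := opDZr a w u 0; rewrite addr0 op0r addr0. Qed.

Lemma iso_table (tab : nat -> nat -> 'rV[K]_n) :
  (forall i j : 'I_n, op Xs`_i Xs`_j = gf (tab i.+1 j.+1)) ->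
  forall u w, ff (op u w) = of_table tab (ff u) (ff w).
Proof.
move=> H u w; rewrite -[of_table _ _ _]ffK; congr ff.
rewrite -{1}(gfK u) -{1}(gfK w) /of_table gf_sum {1 2}/gf op_suml.
apply: eq_bigr => i _; rewrite opZl op_sumr scaler_sumr gf_sum; apply: eq_bigr => j _.
by rewrite opZr H gfZ scalerA.
Qed.

End Iso.

Section Main.
Variables (K : fieldType) (V : vectType K) (mul br : V -> V -> V).
Hypothesis mulDZl : forall (a : K) (x y z : V), mul (a *: x + y) z = a *: mul x z + mul y z.
Hypothesis mulDZr : forall (a : K) (x y z : V), mul x (a *: y + z) = a *: mul x y + mul x z.
Hypothesis mulC : forall x y, mul x y = mul y x.
Hypothesis mulA : forall x y z, mul (mul x y) z = mul x (mul y z).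
Hypothesis brDZl : forall (a : K) (x y z : V), br (a *: x + y) z = a *: br x z + br y z.
Hypothesis brDZr : forall (a : K) (x y z : V), br x (a *: y + z) = a *: br x y + br x z.
Hypothesis bralt : forall x, br x x = 0.
Hypothesis Leib : forall x y z, br (mul x y) z = mul (br x z) y + mul x (br y z).


Lemma mul0l w : mul 0 w = 0.
Proof.
have h := mulDZl 1 0 0 w; rewrite !scale1r addr0 in h.
by apply: (addrI (mul 0 w)); rewrite addr0 -h.
Qed.
Lemma mulDl u v w : mul (u + v) w = mul u w + mul v w.
Proof. by have := mulDZl 1 u v w; rewrite !scale1r. Qed.
Lemma mulZl a u w : mul (a *: u) w = a *: mul u w.
Proof. by rewrite -[a *: u]addr0 mulDZl mul0l addr0. Qed.
Lemma mul0r w : mul w 0 = 0. Proof. by rewrite mulC mul0l. Qed.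
Lemma mulDr u v w : mul w (u + v) = mul w u + mul w v.
Proof. by rewrite !(mulC w) mulDl. Qed.
Lemma mulZr a u w : mul w (a *: u) = a *: mul w u.
Proof. by rewrite !(mulC w) mulZl. Qed.
Lemma mulNl u w : mul (- u) w = - mul u w.
Proof. by rewrite -scaleN1r mulZl scaleN1r. Qed.
Lemma mulNr u w : mul w (- u) = - mul w u.
Proof. by rewrite !(mulC w) mulNl. Qed.
Lemma mulBl u v w : mul (u - v) w = mul u w - mul v w.
Proof. by rewrite mulDl mulNl. Qed.
Lemma mulBr u v w : mul w (u - v) = mul w u - mul w v.
Proof. by rewrite mulDr mulNr. Qed.
Lemma mul_suml I r (P : pred I) (F : I -> V) w :
  mul (\sum_(i <- r | P i) F i) w = \sum_(i <- r | P i) mul (F i) w.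
Proof. exact: (big_morph (fun u => mul u w) (fun u v => mulDl u v w) (mul0l w)). Qed.
Lemma mul_sumr I r (P : pred I) (F : I -> V) w :
  mul w (\sum_(i <- r | P i) F i) = \sum_(i <- r | P i) mul w (F i).
Proof. rewrite mulC mul_suml; apply: eq_bigr => i _; exact: mulC. Qed.

Lemma prod_mem (U W : {vspace V}) u w :
  u \in U -> w \in W -> mul u w \in prod_space mul U W.
Proof.
move=> uU wW; rewrite (coord_vbasis uU) (coord_vbasis wW) mul_suml.
apply: memv_suml => i _; rewrite mulZl mul_sumr; apply: memvZ.
apply: memv_suml => j _; rewrite mulZr; apply: memvZ.
apply: memv_span; apply: allpairs_f; apply: mem_nth; by rewrite size_tuple.
Qed.

Lemma prod_sub (U W Z : {vspace V}) :
  (forall u w, u \in U -> w \in W -> mul u w \in Z) ->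
  (prod_space mul U W <= Z)%VS.
Proof.
move=> H; apply/span_subvP => z /allpairsP [[u w] /= [uU wW ->]].
by apply: H; apply: vbasis_mem.
Qed.


Lemma span_ind (X : seq V) (P : V -> Prop) :
  P 0 -> (forall a u v, P u -> P v -> P (a *: u + v)) ->
  (forall x, x \in X -> P x) -> forall v, v \in <<X>>%VS -> P v.
Proof.
move=> P0 PL PX v Hv; rewrite (@coord_span _ _ _ (in_tuple X) v Hv); apply: big_ind => //.
- by move=> u w Pu Pw; have := PL 1 u w Pu Pw; rewrite scale1r.
- move=> i _; have := PL (coord (in_tuple X) i v) _ _ (PX (in_tuple X)`_i _) P0.
  by rewrite addr0; apply; apply: mem_nth.
Qed.

Lemma prod_ind (U W : {vspace V}) (P : V -> Prop) :
  P 0 -> (forall a u v, P u -> P v -> P (a *: u + v)) ->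
  (forall u w, u \in U -> w \in W -> P (mul u w)) ->
  forall v, v \in prod_space mul U W -> P v.
Proof.
move=> P0 PL PX; apply: span_ind => // z /allpairsP [[u w] /= [uU wW ->]].
by apply: PX; apply: vbasis_mem.
Qed.

Notation Q := (lower_pow mul).

Lemma Q_succ k : Q k.+1 = prod_space mul (Q k) fullv. Proof. by []. Qed.

Lemma Q_mono k : (Q k.+1 <= Q k)%VS.
Proof.
elim: k => [|k IH]; first exact: subvf.
rewrite [Q k.+2]Q_succ; apply: prod_sub => u w uQ _.
by rewrite [Q k.+1]Q_succ; apply: prod_mem; [exact: (subvP IH) | exact: memvf].
Qed.

Lemma Q_le i j : (i <= j)%N -> (Q j <= Q i)%VS.
Proof.
move/subnK <-; elim: (j - i)%N => [|d IH]; first exact: subvv.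
exact: subv_trans (Q_mono _) IH.
Qed.

Lemma Q_mul a b u w : u \in Q a -> w \in Q b -> mul u w \in Q (a + b).+1.
Proof.
elim: b u w a => [|b IH] u w a uQ wQ.
  by rewrite addn0 Q_succ; apply: prod_mem => //; apply: memvf.
move: w wQ; rewrite Q_succ; apply: prod_ind.
- by rewrite mul0r mem0v.
- by move=> c p q Hp Hq; rewrite mulDr mulZr; apply: memvD => //; apply: memvZ.
- move=> p q pQ _; rewrite -mulA addnS Q_succ; apply: prod_mem; last exact: memvf.
  by rewrite -addSn; apply: IH.
Qed.

Definition qp (x : V) k := iter k (mul x) x.

Lemma qpS x k : qp x k.+1 = mul x (qp x k). Proof. by []. Qed.
Lemma qp0 x : qp x 0 = x. Proof. by []. Qed.
Lemma qp_mul x i j : mul (qp x i) (qp x j) = qp x (i + j).+1.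
Proof. elim: i => [|i IH] //; by rewrite qpS mulA IH. Qed.
Lemma qp_in x k : qp x k \in Q k.
Proof. elim: k => [|k IH]; first exact: memvf. exact: (@Q_mul 0 k _ _ (memvf x) IH). Qed.

Section Good.
Lemma brN x y : br y x = - br x y.
Proof.
have := bralt (x + y).
have h1 := brDZl 1 x y (x + y); rewrite !scale1r in h1.
have h2 := brDZr 1 x x y; have h3 := brDZr 1 y x y; rewrite !scale1r in h2 h3.
rewrite h1 h2 h3 !bralt add0r addr0 => H.
by apply/eqP; rewrite -addr_eq0 addrC H.
Qed.

Lemma bZl a u w : br (a *: u) w = a *: br u w. Proof. exact: opZl. Qed.
Lemma bZr a u w : br w (a *: u) = a *: br w u. Proof. exact: opZr. Qed.
Lemma bDl u v w : br (u + v) w = br u w + br v w.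
Proof. by have := brDZl 1 u v w; rewrite !scale1r. Qed.
Lemma bDr u v w : br w (u + v) = br w u + br w v.
Proof. by have := brDZr 1 w u v; rewrite !scale1r. Qed.
Lemma b0l w : br 0 w = 0. Proof. exact: op0l. Qed.
Lemma b0r w : br w 0 = 0. Proof. exact: op0r. Qed.

Variables (X : V).
Notation q := (qp X).

Lemma br_q k z : exists s : K, br (q k.+1) z = s *: mul (q k) (br X z).
Proof.
elim: k => [|k [s IH]].
  by exists (1 + 1); rewrite qpS qp0 Leib mulC scalerDl scale1r.
exists (1 + s); rewrite qpS Leib IH mulZr -mulA -qpS mulC scalerDl scale1r.
by [].
Qed.

Lemma br_xq k : br X (q k) = 0.
Proof.
case: k => [|k]; first exact: bralt.
by rewrite brN; have [s ->] := br_q k X; rewrite bralt mul0r scaler0 oppr0.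
Qed.

Lemma br_qq i j : br (q i) (q j) = 0.
Proof.
case: i => [|i]; first exact: br_xq.
by have [s ->] := br_q i (q j); rewrite br_xq mul0r scaler0.
Qed.

Lemma qz_ge k : q k = 0 -> forall j, (k <= j)%N -> q j = 0.
Proof.
move=> qk j /subnK <-; elim: (j - k)%N => [|d IH] //.
by rewrite addSn qpS IH mul0r.
Qed.

Variables (n : nat) (Y : V) (c : bool) (bv : 'rV[K]_n).
Hypothesis hn : (3 < n)%N.
Definition ee i := if i == n then Y else q i.-1.
Definition Xs := [tuple ee i.+1 | i < n].
Hypothesis g1 : q (n - 1) = 0.
Hypothesis g2 : mul X Y = 0.
Hypothesis g3 : mul Y Y = if c then q (n - 2) else 0.
Hypothesis g4 : br X Y = gf Xs bv.
Hypothesis g5 : forall k, mul (q k) (br X Y) = 0.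
Hypothesis g6 : (<<Xs>> = fullv)%VS.
Hypothesis g7 : \dim (fullv : {vspace V}) = n.

Lemma Xs_nth (i : 'I_n) : Xs`_i = ee i.+1.
Proof. by rewrite nth_mktuple. Qed.

Lemma qY k : mul (q k) Y = 0.
Proof. elim: k => [|k IH] //; by rewrite qpS mulA IH mul0r. Qed.

Lemma gf_e k : (0 < k <= n)%N -> gf Xs (ebas K n k) = ee k.
Proof.
move=> /andP [k0 kn]; rewrite gf_ebas ?k0 //.
have kn' : (k.-1 < n)%N by nlia.
by rewrite (Xs_nth (Ordinal kn')) /= prednK.
Qed.

Lemma good : poisson_iso mul br (@model_mul K n c) (model_br bv).
Proof.
exists (ff Xs); split.
- exact: ff_lin.
- exact: ff_bij.
- apply: iso_table => // i j; rewrite !Xs_nth /fil_mul_tab /ee.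
  have [iE|iN] := eqVneq i.+1 n; have [jE|jN] := eqVneq j.+1 n.
  + rewrite g3 iE jE /=; have -> : (n + n <= n.-1)%N = false by nlia.
    rewrite add0r; case: c => /=; last by rewrite gf0.
    rewrite gf_e; last by nlia.
    rewrite /ee (_ : (n.-1 == n) = false); last by apply/negbTE/eqP; nlia.
    congr q; nlia.
  + rewrite mulC qY /=; have -> : (i.+1 + j.+1 <= n.-1)%N = false by nlia.
    by rewrite add0r !andbF gf0.
  + rewrite qY /=; have -> : (i.+1 + j.+1 <= n.-1)%N = false by nlia.
    by rewrite add0r !andbF gf0.
  + rewrite /= qp_mul // andbF addr0.
    case: ifP => le.
      rewrite gf_e; last by nlia.
      rewrite /ee (_ : (i.+1 + j.+1 == n) = false); last by apply/negbTE/eqP; nlia.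
      congr q; nlia.
    by rewrite gf0; apply: (qz_ge g1); nlia.
- apply: iso_table => // i j; rewrite !Xs_nth /fil_br_tab /ee.
  have [iE|iN] := eqVneq i.+1 n; have [jE|jN] := eqVneq j.+1 n.
  + rewrite bralt iE jE (_ : (n == 1%N) = false) /= ?gf0 //; by apply/negbTE/eqP; nlia.
  + rewrite andbF /= brN.
    case: j jN => [[|j] jlt] jN /=.
      by rewrite g4 gfN.
    by rewrite -qpS; have [s ->] := br_q j Y; rewrite g5 scaler0 oppr0 gf0.
  + rewrite andbT /=.
    case: i iN => [[|i] ilt] iN /=; first by rewrite g4.
    by rewrite -qpS; have [s ->] := br_q i Y; rewrite g5 scaler0 gf0.
  + by rewrite !andbF br_qq gf0.
Qed.

End Good.

Section Fil.
Variable n : nat.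
Hypothesis hn : (3 < n)%N.
Hypothesis hdim : \dim (fullv : {vspace V}) = n.
Hypothesis hD : forall k, (0 < k < n)%N -> \dim (Q k) = (n - k.+1)%N.

Lemma Q0 : Q 0 = fullv. Proof. by []. Qed.



Lemma ex_a : exists2 a, a \notin Q 1 & forall z, mul a z \in Q 2.
Proof.
have [s sQ1 sQ2] : exists2 s, s \in Q 1 & s \notin Q 2.
  by apply: exists_notin; rewrite !hD //=; nlia.
have sp1 := line_split (Q_mono 1) sQ1 sQ2 (ltac:(rewrite !hD //=; nlia)).
have [s' sQ2' sQ3'] : exists2 s, s \in Q 2 & s \notin Q 3.
  by apply: exists_notin; rewrite !hD //=; nlia.
have sp2 := line_split (Q_mono 2) sQ2' sQ3' (ltac:(rewrite !hD //=; nlia)).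
have [u _ uQ] : exists2 u, u \in (fullv : {vspace V}) & u \notin Q 1.
  by apply: exists_notin; rewrite !hD ?hdim //=; nlia.
have [w _ wQ] : exists2 w, w \in (fullv : {vspace V}) & w \notin (<[u]> + Q 1)%VS.
  by apply: exists_notin; rewrite dim_line_add // !hD ?hdim //=; nlia.
have [al h1 _] := sp2 (mul u s) (@Q_mul 0 1 _ _ (memvf u) sQ1).
have [be h2 _] := sp2 (mul w s) (@Q_mul 0 1 _ _ (memvf w) sQ1).
pose a := if al == 0 then u else be *: u - al *: w.
have aQ : a \notin Q 1.
  rewrite /a; case: eqP => // /eqP al0; apply/negP => H; move/negP: wQ; apply.
  have -> : w = al^-1 *: (be *: u - (be *: u - al *: w)).
    by rewrite opprB addrC subrK scalerA mulVf // scale1r.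
  apply: rpredZ; apply: memv_add; [apply: memvZ; apply: memv_line | by rewrite memvN].
have as3 : mul a s \in Q 3.
  rewrite /a; case: eqP => [al0|_]; first by move: h1; rewrite al0 scale0r subr0.
  have -> : mul (be *: u - al *: w) s = be *: (mul u s - al *: s') - al *: (mul w s - be *: s').
    rewrite mulBl !mulZl !scalerBr !scalerA mulrC opprB addrA; congr (_ + _).
    by rewrite subrK.
  by apply: memvB; apply: memvZ.
exists a => // z; apply/negPn/negP => az.
have [c hc _] := sp1 (mul a z) (@Q_mul 0 0 _ _ (memvf a) (memvf z)).
have c0 : c != 0 by apply: contraNneq az => c0; move: hc; rewrite c0 scale0r subr0.
suff : (Q 2 <= Q 3)%VS by move/dimvS; rewrite !hD //=; nlia.
rewrite [Q 3]Q_succ; apply: prod_sub => m p mQ _.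
have [d hd _] := sp1 m mQ.
have -> : m = d *: s + (m - d *: s) by rewrite addrC subrK.
rewrite mulDl mulZl; apply: memvD; last first.
  by apply: (@Q_mul 2 0 _ _ hd (memvf p)).
apply: memvZ.
have -> : s = c^-1 *: (mul a z - (mul a z - c *: s)).
  by rewrite opprB addrC subrK scalerA mulVf // scale1r.
rewrite mulZl; apply: memvZ; rewrite mulBl; apply: memvB; last first.
  by apply: (@Q_mul 2 0 _ _ hc (memvf p)).
rewrite mulA.
have [e he _] := sp1 (mul z p) (@Q_mul 0 0 _ _ (memvf z) (memvf p)).
have -> : mul z p = e *: s + (mul z p - e *: s) by rewrite addrC subrK.
rewrite mulDr mulZr; apply: memvD; first by apply: memvZ.
by apply: (@Q_mul 0 2 _ _ (memvf a) he).
Qed.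

Section WithX.
Variables a x : V.
Hypothesis haQ : a \notin Q 1.
Hypothesis haz : forall z, mul a z \in Q 2.
Hypothesis hx : x \notin (<[a]> + Q 1)%VS.
Notation q := (qp x).

Lemma dec p : exists al be r, r \in Q 1 /\ p = al *: a + be *: x + r.
Proof. apply: decomp2 => //; rewrite hD ?hdim //=; nlia. Qed.

Lemma aq k : mul a (q k) \in Q k.+2.
Proof.
elim: k => [|k IH]; first exact: haz.
by rewrite qpS -mulA (mulC a) mulA; apply: (@Q_mul 0 k.+2 _ _ (memvf x) IH).
Qed.

Lemma Wl k v : v \in Q k.+2 -> v \in (<[q k.+1]> + Q k.+2)%VS.
Proof. by apply: subvP; apply: addvSr. Qed.
Lemma Wq k c : c *: q k.+1 \in (<[q k.+1]> + Q k.+2)%VS.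
Proof. by apply: (subvP (addvSl _ _)); apply: memvZ; apply: memv_line. Qed.

Lemma qnot k : (k <= n - 2)%N -> q k \notin Q k.+1.
Proof.
elim: k => [|k IH] kn; first by apply: contra hx; apply: (subvP (addvSr _ _)).
have IH' := IH (ltnW kn).
have sub : (Q k.+1 <= <[q k.+1]> + Q k.+2)%VS.
  rewrite [Q k.+1]Q_succ; apply: prod_sub => m p mQ _.
  have [al [be [r [rQ ->]]]] := dec p.
  rewrite !mulDr !mulZr.
  suff [h1 h2 h3] : [/\ mul m a \in (<[q k.+1]> + Q k.+2)%VS,
     mul m x \in (<[q k.+1]> + Q k.+2)%VS & mul m r \in (<[q k.+1]> + Q k.+2)%VS].
    by apply: memvD => //; apply: memvD; apply: memvZ.
  case: k IH IH' kn mQ => [|k] IH IH' kn mQ.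
    split.
    - by apply: Wl; rewrite mulC; apply: haz.
    - have [al' [be' [r' [rQ' ->]]]] := dec m.
      rewrite !mulDl !mulZl; apply: memvD; [apply: memvD|].
      + by apply: memvZ; apply: Wl; apply: haz.
      + exact: (Wq 0 be').
      + by apply: Wl; exact: (@Q_mul 1 0 _ _ rQ' (memvf _)).
    - by apply: Wl; rewrite mulC; apply: (@Q_mul 1 0 _ _ rQ (memvf _)).
  have sp := line_split (Q_mono k.+1) (qp_in x k.+1) IH' (ltac:(rewrite !hD //=; nlia)).
  have [c hc _] := sp m mQ.
  have -> : m = c *: q k.+1 + (m - c *: q k.+1) by rewrite addrC subrK.
  move: (m - c *: q k.+1) hc => r0 hc.
  rewrite !mulDl !mulZl; split.
  - apply: Wl; apply: memvD; last by rewrite mulC; apply: (@Q_mul 0 k.+2 _ _ (memvf _) hc).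
    by apply: memvZ; rewrite mulC; apply: aq.
  - apply: memvD; first by rewrite mulC -qpS; apply: Wq.
    by apply: Wl; rewrite mulC; apply: (@Q_mul 0 k.+2 _ _ (memvf _) hc).
  - apply: Wl; apply: memvD; last by have := @Q_mul k.+2 0 _ _ hc (memvf r); rewrite addn0.
    apply: memvZ; by have := @Q_mul k.+1 1 _ _ (qp_in x _) rQ; rewrite addn1.
apply/negP => qQ; have : (Q k.+1 <= Q k.+2)%VS.
  by apply: (subv_trans sub); rewrite subv_add subvv andbT; apply/subvP => z /vlineP [c ->]; apply: memvZ.
by move/dimvS; rewrite !hD //=; nlia.
Qed.

Lemma qsplit k : (0 < k)%N -> (k <= n - 2)%N -> forall m, m \in Q k ->
  exists2 c, m - c *: q k \in Q k.+1 & True.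
Proof.
move=> k0 kn; apply: line_split (Q_mono k) (qp_in x k) (qnot kn) _.
rewrite !hD //=; nlia.
Qed.

Lemma Qz k : (n - 1 <= k)%N -> Q k = 0%VS.
Proof.
move=> kn; apply/eqP; rewrite -subv0.
apply: subv_trans (Q_le kn) _; rewrite subv0 -dimv_eq0 hD; [apply/eqP; nlia | nlia].
Qed.

Lemma qz k : (n - 1 <= k)%N -> q k = 0.
Proof. by move=> kn; have := qp_in x k; rewrite Qz // memv0 => /eqP. Qed.

Lemma ex_y : exists2 y, y - a \in Q 1 & mul x y = 0.
Proof.
suff H : forall j, (j <= n - 3)%N -> exists2 y, y - a \in Q 1 & mul x y \in Q j.+2.
  have [y h1 h2] := H (n - 3)%N (leqnn _); exists y => //.
  by move: h2; rewrite Qz ?memv0 => [/eqP|] //; nlia.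
elim=> [|j IH] jn.
  by exists a; rewrite ?subrr ?mem0v // mulC; apply: haz.
have [y h1 h2] := IH (ltnW jn).
have [c hc _] := qsplit (isT : (0 < j.+2)%N) (ltac:(nlia)) h2.
exists (y - c *: q j.+1).
  rewrite addrAC; apply: memvB => //; apply: memvZ.
  by apply: (subvP (Q_le (isT : (1 <= j.+1)%N))); apply: qp_in.
by rewrite mulBr mulZr -qpS.
Qed.

Lemma kerx z : z \in Q 1 -> mul x z = 0 -> exists c, z = c *: q (n - 2).
Proof.
move=> zQ xz.
suff H : forall j, (j <= n - 3)%N -> z \in Q j.+1.
  have := H (n - 3)%N (leqnn _); have -> : ((n - 3).+1 = n - 2)%N by nlia.
  have n2 : (0 < n - 2)%N by nlia.
  move=> zQ'; have [c hc _] := qsplit n2 (leqnn _) zQ'.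
  by exists c; move: hc; rewrite Qz ?memv0 ?subr_eq0 => [/eqP|] //; nlia.
elim=> [|j IH] jn //.
have zj := IH (ltnW jn).
have [c hc _] := qsplit (isT : (0 < j.+1)%N) (ltac:(nlia)) zj.
have [c0|c0] := eqVneq c 0; first by move: hc; rewrite c0 scale0r subr0.
have : c *: q j.+2 \in Q j.+3.
  have -> : c *: q j.+2 = - mul x (z - c *: q j.+1) by rewrite mulBr xz sub0r opprK mulZr.
  by rewrite memvN; apply: (@Q_mul 0 j.+2 _ _ (memvf _) hc).
move=> H; have : c^-1 *: (c *: q j.+2) \in Q j.+3 by apply: memvZ.
by rewrite scalerA mulVf // scale1r (negbTE (qnot _)) //; nlia.
Qed.

Lemma ee_in y (i : 'I_n) : ee x n y i.+1 \in <<Xs x n y>>%VS.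
Proof. by apply: memv_span; rewrite -(tnth_mktuple (fun i : 'I_n => ee x n y i.+1)); apply: mem_tnth. Qed.

Lemma Xs_span y : y - a \in Q 1 -> <<Xs x n y>>%VS = fullv.
Proof.
move=> ya; set S := <<Xs x n y>>%VS.
have qS k : (k <= n - 2)%N -> q k \in S.
  move=> kn; have kn' : (k < n)%N by nlia.
  have := ee_in y (Ordinal kn'); rewrite /ee /=.
  by rewrite (_ : (k.+1 == n) = false) //; apply/negbTE/eqP; nlia.
have yS : y \in S.
  have nn : (n.-1 < n)%N by nlia.
  have := ee_in y (Ordinal nn); rewrite /ee /=.
  by rewrite (_ : (n.-1.+1 == n) = true) //; apply/eqP; nlia.
have QS d : (d <= n - 2)%N -> (Q (n - 1 - d) <= S)%VS.
  elim: d => [|d IH] dn.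
    by rewrite subn0 Qz // sub0v.
  apply/subvP => m mQ.
  have k0 : (0 < n - 1 - d.+1)%N by nlia.
  have kn : (n - 1 - d.+1 <= n - 2)%N by nlia.
  have [c hc _] := qsplit k0 kn mQ.
  have -> : m = (m - c *: q (n - 1 - d.+1)) + c *: q (n - 1 - d.+1) by rewrite subrK.
  apply: memvD; last by apply: memvZ; apply: qS.
  apply: (subvP (IH (ltnW dn))).
  by rewrite (_ : (n - 1 - d.+1).+1 = (n - 1 - d)%N) in hc => //; nlia.
have Q1S : (Q 1 <= S)%VS.
  by have := QS (n - 2)%N (leqnn _); rewrite (_ : (n - 1 - (n - 2))%N = 1%N) //; nlia.
apply/eqP; rewrite eqEdim subvf /=; apply: dimvS; apply/subvP => p _.
have [al [be [r [rQ ->]]]] := dec p.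
apply: memvD; last exact: (subvP Q1S).
apply: memvD; apply: memvZ; last by apply: (qS 0%N); nlia.
have -> : a = y - (y - a) by rewrite opprB addrC subrK.
by apply: memvB => //; apply: (subvP Q1S).
Qed.

Lemma struct : exists y b be e, [/\ mul x y = 0, mul y y = b *: q (n - 2),
  br x y = be *: y + e *: q (n - 2), <<Xs x n y>>%VS = fullv & (b != 0 -> be = 0)].
Proof.
have [y ya xy] := ex_y.
have [b yy] : exists b, mul y y = b *: q (n - 2).
  apply: kerx; first exact: (@Q_mul 0 0 _ _ (memvf y) (memvf y)).
  by rewrite -mulA xy mul0l.
pose v := br x y.
have xv : mul x v = 0.
  have := Leib x y x; rewrite xy b0l bralt mul0l add0r brN mulNr => /eqP.
  by rewrite eq_sym oppr_eq0 => /eqP.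
have yv : mul y v = 0.
  have := Leib x y y; rewrite xy b0l bralt mul0r addr0 mulC => /eqP.
  by rewrite eq_sym => /eqP.
have [al [be [r [rQ vE]]]] := dec v.
set r' := r - al *: (y - a).
have r'Q : r' \in Q 1 by apply: memvB => //; apply: memvZ.
have vE' : v = al *: y + be *: x + r'.
  rewrite vE /r' scalerBr opprB [r + _]addrC addrA; congr (_ + r).
  by rewrite [al *: y + _]addrC -addrA [al *: a - _]addrC addNKr addrC.
clearbody r'.
have xr : mul x r' = - (be *: q 1).
  have := xv; rewrite vE' !mulDr !mulZr xy scaler0 add0r => /eqP.
  by rewrite addrC addr_eq0 => /eqP.
have be0 : be = 0.
  apply/eqP; apply: contraT => be0.
  have : be^-1 *: (- mul x r') \in Q 2.
    by apply: memvZ; rewrite memvN; apply: (@Q_mul 0 1 _ _ (memvf _) r'Q).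
  by rewrite xr opprK scalerA mulVf // scale1r (negbTE (qnot _)) //; nlia.
have [e re] : exists e, r' = e *: q (n - 2).
  by apply: kerx => //; rewrite xr be0 scale0r oppr0.
exists y, b, al, e; split => //.
- by rewrite -/v vE' be0 scale0r addr0 re.
- exact: Xs_span.
- move=> b0; apply/eqP; apply: contraT => al0.
  have qn : q (n - 2) != 0.
    by apply: contraNneq (qnot (leqnn _)) => ->; apply: mem0v.
  move: yv; rewrite vE' be0 scale0r addr0 re mulDr !mulZr yy mulC qY // scalerA => /eqP.
  by rewrite scaler0 addr0 scaler_eq0 mulf_eq0 (negbTE al0) (negbTE b0) (negbTE qn).
Qed.

End WithX.
Lemma qp_scale (l : K) z k : qp (l *: z) k = l ^+ k.+1 *: qp z k.
Proof.
elim: k => [|k IH]; first by rewrite expr1.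
by rewrite !qpS IH mulZl mulZr scalerA -exprS.
Qed.

Lemma scaled x y b be e (l m nu : K) c (bv : 'rV[K]_n) :
  qp x (n - 1) = 0 -> mul x y = 0 -> mul y y = b *: qp x (n - 2) ->
  br x y = be *: y + e *: qp x (n - 2) -> <<Xs x n y>>%VS = fullv ->
  l != 0 -> m != 0 ->
  (m * m * b) *: qp x (n - 2) = (if c then l ^+ (n - 2).+1 *: qp x (n - 2) else 0) ->
  (l * m) *: (be *: y + e *: qp x (n - 2)) =
     gf (Xs (l *: x) n (m *: y + nu *: qp x (n - 2))) bv ->
  poisson_iso mul br (@model_mul K n c) (model_br bv).
Proof.
move=> o1 o2 o3 o4 o5 l0 m0 s1 s2.
set X := l *: x; set Y := m *: y + nu *: qp x (n - 2).
have n21 : (n - 2).+1 = (n - 1)%N by nlia.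
have qq : forall k, mul (qp x k) (qp x (n - 2)) = 0.
  by move=> k; rewrite qp_mul; apply: (qz_ge o1); nlia.
have qy : forall k, mul (qp x k) y = 0 by apply: qY.
have xq : mul x (qp x (n - 2)) = 0 by rewrite -qpS n21.
have brXY : br X Y = (l * m) *: (be *: y + e *: qp x (n - 2)).
  by rewrite /X /Y bZl bDr !bZr br_xq scaler0 addr0 o4 scalerA.
apply: (@good X n Y c bv hn).
- by rewrite /X qp_scale o1 scaler0.
- by rewrite /X /Y mulZl mulDr !mulZr o2 xq !scaler0 addr0 scaler0.
  rewrite /Y !mulDl !mulDr !mulZl !mulZr o3 (mulC y) qy qq !scaler0 !addr0.
  rewrite !scalerA s1; case: (c) => //; by rewrite /X qp_scale.
- by rewrite brXY.
- move=> k; rewrite brXY /X qp_scale mulZl mulZr mulDr !mulZr qy qq !scaler0 addr0 !scaler0.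
  by [].
- apply/eqP; rewrite eqEdim subvf /= -{1}o5; apply: dimvS; apply/span_subvP => v.
  move=> /tnthP [i ->]; rewrite tnth_mktuple /ee.
  have Xq k : (k <= n - 2)%N -> qp x k \in <<Xs X n Y>>%VS.
    move=> kn; have kn' : (k < n)%N by nlia.
    have := ee_in X Y (Ordinal kn'); rewrite /ee /=.
    rewrite (_ : (k.+1 == n) = false); last by apply/negbTE/eqP; nlia.
    rewrite /X qp_scale => h.
    have : (l ^+ k.+1)^-1 *: (l ^+ k.+1 *: qp x k) \in <<Xs X n Y>>%VS by apply: memvZ.
    by rewrite scalerA mulVf ?scale1r // expf_neq0.
  case: eqP => [iE|iN].
    have nn : (n.-1 < n)%N by nlia.
    have := ee_in X Y (Ordinal nn); rewrite /ee /= (_ : (n.-1.+1 == n) = true); last first.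
      by apply/eqP; nlia.
    move=> hY.
    have -> : y = m^-1 *: (Y - nu *: qp x (n - 2)).
      by rewrite /Y addrK scalerA mulVf // scale1r.
    by apply: memvZ; apply: memvB => //; apply: memvZ; apply: Xq.
  by apply: Xq; have := ltn_ord i; nlia.
- exact: hdim.
Qed.
Lemma gfY X Y : gf (Xs X n Y) (ebas K n n) = Y.
Proof. rewrite gf_e //; last by nlia. by rewrite /ee eqxx. Qed.

Lemma gfq X Y : gf (Xs X n Y) (ebas K n n.-1) = qp X (n - 2).
Proof.
rewrite gf_e; [|done|nlia|nlia].
rewrite /ee (_ : (n.-1 == n) = false); last by apply/negbTE/eqP; nlia.
congr qp; nlia.
Qed.

Lemma classify (hroot : forall k, (0 < k)%N -> forall z : K, exists w, w ^+ k = z) :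
  [\/ poisson_iso mul br (@model_mul K n false) (model_br (0 : 'rV[K]_n)) \/
      poisson_iso mul br (@model_mul K n false) (model_br (@ebas K n n)),
      poisson_iso mul br (@model_mul K n false) (model_br (@ebas K n n.-1)),
      poisson_iso mul br (@model_mul K n true) (model_br (0 : 'rV[K]_n))
    | poisson_iso mul br (@model_mul K n true) (model_br (@ebas K n n.-1))].
Proof.
have [a aQ az] := ex_a.
have [x _ hx] : exists2 x, x \in (fullv : {vspace V}) & x \notin (<[a]> + Q 1)%VS.
  by apply: exists_notin; rewrite dim_line_add // hD ?hdim //=; nlia.
have [y [b [be [e [o2 o3 o4 o5 o6]]]]] := struct aQ az hx.
have o1 : qp x (n - 1) = 0 by apply: qz.
have oneK : (1 : K) != 0 := oner_neq0 K.
have [b0|b0] := eqVneq b 0.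
  have [be0|be0] := eqVneq be 0.
    have [e0|e0] := eqVneq e 0.
      apply: Or41; left.
      apply: (@scaled x y b be e 1 1 0) => //.
        by rewrite b0 mulr0 scale0r.
      by rewrite be0 e0 !scale0r addr0 scaler0 gf0.
    apply: Or42.
    apply: (@scaled x y b be e 1 e^-1 0) => //; first by rewrite invr_eq0.
      by rewrite b0 mulr0 scale0r.
    rewrite gfq qp_scale expr1n scale1r be0 scale0r add0r scalerA mul1r mulVf //.
    by rewrite scale1r.
  apply: Or41; right.
  apply: (@scaled x y b be e be^-1 1 (e / be)) => //; first by rewrite invr_eq0.
    by rewrite b0 mulr0 scale0r.
  rewrite gfY scalerDr !scalerA mulr1 mulVf // scale1r; congr (_ + _).
  by rewrite mulrC.
have be0 := o6 b0.
have [e0|e0] := eqVneq e 0.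
  apply: Or43.
  have [w hw] := hroot 2%N isT b.
  have w0 : w != 0 by apply: contraNneq b0 => w0; rewrite -hw w0 expr0n.
  apply: (@scaled x y b be e 1 w^-1 0) => //; first by rewrite invr_eq0.
    rewrite expr1n -hw; congr (_ *: _); field; exact: w0.
  by rewrite be0 e0 !scale0r addr0 scaler0 gf0.
apply: Or44.
have [t ht] := hroot (n - 3)%N (ltac:(nlia)) (e ^+ 2 / b).
have t0 : t != 0.
  apply: contraNneq e0 => t0; move: ht; rewrite t0 expr0n.
  rewrite (_ : (n - 3 == 0)%N = false); last by apply/negbTE/eqP; nlia.
  move=> /esym /eqP; by rewrite mulf_eq0 invr_eq0 (negbTE b0) orbF expf_eq0.
have E1 : t ^+ (n - 2) = t ^+ (n - 3) * t by rewrite -exprSr; congr (_ ^+ _); nlia.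
have E2 : t ^+ (n - 2).+1 = t ^+ (n - 3) * t * t by rewrite exprSr E1.
apply: (@scaled x y b be e t (t ^+ (n - 2) / e) 0) => //.
- by rewrite mulf_neq0 ?expf_neq0 ?invr_eq0.
- rewrite E1 E2 ht; congr (_ *: _); field; by rewrite e0 b0.
- rewrite gfq qp_scale be0 scale0r add0r scalerA; congr (_ *: _).
  rewrite E1 E2 ht; field; by rewrite e0 b0.
Qed.

End Fil.
End Main.

Theorem theorem3p9 (R : realType) (n : nat) (V : vectType R[i])
  (mul br : V -> V -> V) :
  (3 < n)%N ->
  \dim (fullv : {vspace V}) = n ->
  poisson_algebra mul br ->
  filiform mul ->
  [\/ poisson_iso mul br (@model_mul R[i] n false) (model_br (0 : 'rV[R[i]]_n)) \/
      poisson_iso mul br (@model_mul R[i] n false) (model_br (@ebas R[i] n n)),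
      poisson_iso mul br (@model_mul R[i] n false) (model_br (@ebas R[i] n n.-1)),
      poisson_iso mul br (@model_mul R[i] n true) (model_br (0 : 'rV[R[i]]_n))
    | poisson_iso mul br (@model_mul R[i] n true) (model_br (@ebas R[i] n n.-1))].
Proof.
move=> hn hdim [[[mDZl mDZr] [bDZl bDZr]] [mC mA] balt _ Lb] fil.
have hD : forall k, (0 < k < n)%N -> \dim (lower_pow mul k) = (n - k.+1)%N.
  move=> k kn; have := fil k.+1; rewrite hdim; apply; nlia.
apply: (classify mDZl mDZr mC mA bDZl bDZr balt Lb hn hdim hD).
move=> k k0 z; exists (k.-root z); exact: rootCK.
Qed.
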